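(* Let $M$, $(p_j)_{j\in M}$, $m$ and $LP$ be as follows: $M$ is a finite set of item types, $(p_j)$ is a probability distribution on $M$, $m\ge 1$, and $$LP=\max \sum_{i,S}x_{i,S}w_i(S)\quad\text{s.t.}\quad \sum_{i,S}x_{i,S}c_j(S)\le p_j m\ \ \forall j;\qquad \sum_S x_{i,S}=1\ \ \forall i;\qquad x_{i,S}\ge 0,$$ with $S$ ranging over multisets of at most $m$ items and $c_j(S)$ the multiplicity of $j$ in $S$. Assume the valuations $w_1,\dots,w_n:\mathbb{Z}_+^M\to\mathbb{R}$ are monotone and have the property of diminishing returns. Fix any partial allocation $(T_1,\dots,T_n)$ of multisets. Let the next item $j$ be drawn from $(p_j)$ and allocated greedily, i.e., to an agent maximizing $w_i(T_i+j)-w_i(T_i)$. Then the expected increase in welfare is at least $\frac1m\big(LP-\sum_i w_i(T_i)\big)$.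
   Context: Multisets over $M$ are identified with vectors in $\mathbb{Z}_+^M$. $T+j$ adds one copy of $j$ to $T$. A function $f:\mathbb{Z}_+^M\to\mathbb{R}$ has the property of diminishing returns if for all $x\le y$ (coordinatewise) and every unit vector $e_j$, $f(x+e_j)-f(x)\ge f(y+e_j)-f(y)$. It is monotone if $f(x)\le f(y)$ whenever $x\le y$. *)

(* Defs.v *)
From HB Require Import structures.
From mathcomp Require Import all_boot all_order all_algebra.
Set Implicit Arguments. Unset Strict Implicit. Unset Printing Implicit Defensive.
Import Order.TTheory GRing.Theory Num.Theory.
Local Open Scope ring_scope.

Definition mset (M : finType) := M -> nat.

Definition add1 (M : finType) (T : mset M) (j : M) : mset M :=
  fun k => (T k + (k == j))%N.

Definition mle (M : finType) (x y : mset M) : Prop := forall k, (x k <= y k)%N.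

Definition monotone_val (M : finType) (R : numDomainType) (f : mset M -> R) : Prop :=
  forall x y, mle x y -> f x <= f y.

Definition dim_returns (M : finType) (R : numDomainType) (f : mset M -> R) : Prop :=
  forall x y j, mle x y -> f (add1 y j) - f y <= f (add1 x j) - f x.

(* Multisets of at most m items: encoded by multiplicity functions bounded by m
   (with total size at most m); msS converts to a multiset vector. *)
Definition bset (M : finType) (m : nat) := {ffun M -> 'I_m.+1}.
Definition msS (M : finType) (m : nat) (S : bset M m) : mset M := fun j => nat_of_ord (S j).
Definition small (M : finType) (m : nat) (S : bset M m) : bool :=
  (\sum_(j : M) nat_of_ord (S j) <= m)%N.

Definition lp_feasible (M : finType) (R : numDomainType) (n m : nat) (p : M -> R)
  (x : 'I_n -> bset M m -> R) : Prop :=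
  [/\ forall j : M,
        \sum_(i < n) \sum_(S : bset M m | small S) x i S * (nat_of_ord (S j))%:R
          <= p j * m%:R,
      forall i : 'I_n, \sum_(S : bset M m | small S) x i S = 1
    & forall i S, small S -> 0 <= x i S].

Definition lp_value (M : finType) (R : numDomainType) (n m : nat)
  (w : 'I_n -> mset M -> R) (x : 'I_n -> bset M m -> R) : R :=
  \sum_(i < n) \sum_(S : bset M m | small S) x i S * w i (msS S).

Definition is_LP (M : finType) (R : numDomainType) (n : nat) (m : nat) (p : M -> R)
  (w : 'I_n -> mset M -> R) (LP : R) : Prop :=
  (exists2 x : 'I_n -> bset M m -> R, lp_feasible p x & lp_value w x = LP) /\
  (forall x : 'I_n -> bset M m -> R, lp_feasible p x -> lp_value w x <= LP).

Definition gain (M : finType) (R : numDomainType) (n : nat)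
  (w : 'I_n -> mset M -> R) (T : 'I_n -> mset M) (i : 'I_n) (j : M) : R :=
  w i (add1 (T i) j) - w i (T i).

(* Main.v *)
Require Import Defs.
From HB Require Import structures.
From mathcomp Require Import all_boot all_order all_algebra.
Import Order.TTheory GRing.Theory Num.Theory.
Local Open Scope ring_scope.

Definition addv {M : finType} (T U : mset M) : mset M := fun k => (T k + U k)%N.

Lemma f_ext (R : realFieldType) (M : finType) (f : mset M -> R) :
  monotone_val f -> forall x y, (forall k, x k = y k) -> f x = f y.
Proof.
move=> Hm x y H; apply/le_anti/andP; split; apply: Hm => k; rewrite H //.
Qed.

Lemma sub_bound (R : realFieldType) (M : finType) (f : mset M -> R) (T : mset M) :
  monotone_val f -> dim_returns f ->
  forall N U, (\sum_k U k = N)%N ->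
  f (addv T U) - f T <= \sum_k (U k)%:R * (f (add1 T k) - f T).
Proof.
move=> Hm Hd; elim=> [|N IH] U HU.
- have U0 : forall k, U k = 0%N.
    by move=> k; apply/eqP; rewrite -leqn0 -HU (bigD1 k) //= leq_addr.
  rewrite (@f_ext _ _ _ Hm (addv T U) T) ?subrr; last by move=> k; rewrite /addv U0 addn0.
  by rewrite big1 // => k _; rewrite U0 mul0r.
- have [j Uj] : exists j, (0 < U j)%N.
    case: (pickP (fun k => 0 < U k)%N) => [j Hj|H]; first by exists j.
    by move: HU; rewrite big1 // => k _; apply/eqP; rewrite -leqn0 leqNgt H.
  pose U' := fun k => (U k - (k == j))%N.
  have eqU k : U k = (U' k + (k == j))%N.
    rewrite /U'; case: eqP => [->|_]; first by rewrite subnK.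
    by rewrite subn0 addn0.
  have sj : (\sum_(k : M) ((k == j) : nat) = 1)%N.
    rewrite (bigD1 j) //= eqxx big1 ?addn0 // => k /negbTE -> //.
  have HU' : (\sum_k U' k = N)%N.
    by move: HU; rewrite (eq_bigr _ (fun k _ => eqU k)) big_split /= sj addn1 => -[].
  have -> : f (addv T U) - f T =
     (f (add1 (addv T U') j) - f (addv T U')) + (f (addv T U') - f T).
    rewrite addrA subrK; congr (_ - _); apply: f_ext => // k.
    by rewrite /add1 /addv eqU addnA.
  have -> : \sum_k (U k)%:R * (f (add1 T k) - f T) =
     \sum_k (U' k)%:R * (f (add1 T k) - f T) + (f (add1 T j) - f T).
    rewrite (eq_bigr (fun k => (U' k)%:R * (f (add1 T k) - f T) +
                   ((k == j) : nat)%:R * (f (add1 T k) - f T))); last first.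
      by move=> k _; rewrite eqU natrD mulrDl.
    rewrite big_split /=; congr (_ + _).
    rewrite (bigD1 j) //= eqxx mul1r big1 ?addr0 // => k /negbTE ->.
    by rewrite mul0r.
  rewrite addrC; apply: lerD; first exact: IH.
  by apply: Hd => k; rewrite /addv leq_addr.
Qed.

Theorem lemma4p6 (R : realFieldType) (M : finType) (n m : nat)
  (p : M -> R) (w : 'I_n -> mset M -> R) (LP : R) (T : 'I_n -> mset M)
  (g : M -> 'I_n) :
  (forall j, 0 <= p j) -> \sum_(j : M) p j = 1 ->
  (1 <= m)%N ->
  is_LP m p w LP ->
  (forall i, monotone_val (w i)) ->
  (forall i, dim_returns (w i)) ->
  (* g is a greedy allocation rule: item j goes to an agent maximizing the marginal gain *)
  (forall j i, gain w T i j <= gain w T (g j) j) ->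
  \sum_(j : M) p j * gain w T (g j) j >= (m%:R)^-1 * (LP - \sum_(i < n) w i (T i)).
Proof.
move=> p0 p1 m1 [[x [Hc Hs Hx] Hval] _] Hm Hd Hg.
pose G j := gain w T (g j) j.
have G0 j : 0 <= G j.
  by rewrite /G /gain subr_ge0; apply: Hm => k; rewrite /add1 leq_addr.
have key : LP - \sum_(i < n) w i (T i) <= m%:R * \sum_j p j * G j.
  have -> : \sum_(i < n) w i (T i) =
      \sum_(i < n) \sum_(S : bset M m | small S) x i S * w i (T i).
    by apply: eq_bigr => i _; rewrite -big_distrl /= Hs mul1r.
  rewrite -Hval /lp_value -sumrB.
  apply: le_trans (_ : _ <= \sum_(i < n) \sum_(S : bset M m | small S)
        \sum_j x i S * ((S j)%:R * G j)) _.
    apply: ler_sum => i _; rewrite -sumrB; apply: ler_sum => S hS.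
    rewrite -mulrBr -mulr_sumr; apply: ler_wpM2l; first exact: Hx.
    apply: le_trans (_ : _ <= w i (addv (T i) (msS S)) - w i (T i)) _.
      by rewrite lerD2r; apply: Hm => k; rewrite /addv /msS leq_addl.
    apply: le_trans; first exact: (@sub_bound _ _ _ (T i) (Hm i) (Hd i) (\sum_k msS S k)%N (msS S) (erefl _)).
    apply: ler_sum => j _; apply: ler_wpM2l; first exact: ler0n.
    exact: Hg.
  rewrite (eq_bigr (fun i => \sum_j \sum_(S : bset M m | small S)
        x i S * ((S j)%:R * G j))); last by move=> i _; rewrite exchange_big.
  rewrite exchange_big /= mulr_sumr; apply: ler_sum => j _.
  have -> : \sum_(i < n) \sum_(S : bset M m | small S) x i S * ((S j)%:R * G j) =
     (\sum_(i < n) \sum_(S : bset M m | small S) x i S * (S j)%:R) * G j.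
    rewrite big_distrl; apply: eq_bigr => i _; rewrite big_distrl.
    by apply: eq_bigr => S _; rewrite mulrA.
  rewrite mulrA [m%:R * p j]mulrC; apply: ler_wpM2r => //; exact: Hc.
have mpos : 0 < (m%:R : R) by rewrite ltr0n.
apply: le_trans (_ : _ <= m%:R^-1 * (m%:R * \sum_j p j * G j)) _.
  by apply: ler_wpM2l => //; rewrite invr_ge0 ltW.
by rewrite mulKf // gt_eqF.
Qed.
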